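(* Let $\Sigma$ be a finite alphabet and let $\mathbf w$ be a right-infinite word over $\Sigma$. Suppose there is a positive number $\kappa$ such that for each integer $b\ge1$ there is an integer $n=n(b)\ge 1$ with $L_{\mathbf w}(bn)\le\kappa$. Then $\#\mathrm{Per}(\mathbf w)\le\kappa$. In particular, if $L_{\mathbf w}$ is uniformly bounded, then $\mathrm{Per}(\mathbf w)$ is finite.
   Context: $\mathrm{Fac}(\mathbf u)$ denotes the set of finite factors (contiguous blocks) of a right-infinite word $\mathbf u$. Two words are cyclically equivalent if each is a cyclic shift of the other; $[v]_C$ is the class of $v$. $L_{\mathbf w}(n)=\#\{[v]_C : |v|=n,\ [v]_C\subseteq \mathrm{Fac}(\mathbf w)\}$. Call two right-infinite words equivalent ($\sim$) if they have the same set of finite factors. $\mathrm{Per}(\mathbf w)$ is the set of $\sim$-equivalence classes of right-infinite periodic words $v^\omega=vvv\cdots$ ($v$ nonempty) with $\mathrm{Fac}(v^\omega)\subseteq\mathrm{Fac}(\mathbf w)$. *)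

(* Defs.v *)
From mathcomp Require Import all_boot all_order all_algebra.
From mathcomp Require Import boolp classical_sets cardinality reals.
Set Implicit Arguments. Unset Strict Implicit. Unset Printing Implicit Defensive.
Import Order.TTheory GRing.Theory Num.Theory.
Local Open Scope classical_set_scope.

Definition Fac (Sigma : Type) (u : nat -> Sigma) : set (seq Sigma) :=
  [set v | exists i, v = mkseq (fun k => u (i + k)) (size v)].

(* The periodic word v^omega for the nonempty word v = x :: s. *)
Definition omega (Sigma : Type) (x : Sigma) (s : seq Sigma) : nat -> Sigma :=
  fun i => nth x (x :: s) (i %% size (x :: s)).

Definition word_equiv (Sigma : Type) (u u' : nat -> Sigma) : Prop := Fac u = Fac u'.

Definition cyc_class (Sigma : finType) (n : nat) (t : n.-tuple Sigma) : {set n.-tuple Sigma} :=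
  [set [tuple of rot k t] | k : 'I_n.+1].

Definition Lw (Sigma : finType) (w : nat -> Sigma) (n : nat) : nat :=
  #|[set cyc_class t | t in
      [set t : n.-tuple Sigma | `[< forall u, u \in cyc_class t -> Fac w (tval u) >] ] ]|.

Definition Per (Sigma : Type) (w : nat -> Sigma) : set (set (nat -> Sigma)) :=
  [set C | exists (x : Sigma) (s : seq Sigma),
      Fac (omega x s) `<=` Fac w /\ C = [set u | word_equiv u (omega x s)]].

(* Main.v *)
Require Import Defs.
From mathcomp Require Import all_boot all_order all_algebra.
From mathcomp Require Import boolp classical_sets cardinality reals.
From mathcomp Require Import zify.
Import Order.TTheory GRing.Theory Num.Theory.
Set Implicit Arguments. Unset Strict Implicit. Unset Printing Implicit Defensive.
Local Open Scope classical_set_scope.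

Lemma omega_per (Sigma : Type) (x : Sigma) s m c :
  omega x s (m + c * size (x :: s)) = omega x s m.
Proof. by rewrite /omega addnC modnMDl. Qed.

Lemma perN (Sigma : Type) (g : nat -> Sigma) N :
  (forall m, g (m + N) = g m) -> forall m c, g (m + c * N) = g m.
Proof.
move=> H m c; elim: c => [|c IH]; first by rewrite mul0n addn0.
by rewrite mulSn addnA addnAC H.
Qed.

Lemma mkseq_add (T : Type) (g : nat -> T) a b :
  mkseq g (a + b) = mkseq g a ++ mkseq (fun j => g (a + j)) b.
Proof.
rewrite /mkseq iotaD map_cat add0n -[in iota a _](addn0 a) iotaDl -map_comp //.
Qed.

Lemma rot_mk (T : Type) (g : nat -> T) N k : (forall m, g (m + N) = g m) -> (k <= N)%N ->
  rot k (mkseq g N) = mkseq (fun j => g (k + j)) N.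
Proof.
move=> Hp kN.
have E1: mkseq g N = mkseq g k ++ mkseq (fun j => g (k + j)) (N - k).
  by rewrite -{1}(subnKC kN) mkseq_add.
have E2: mkseq (fun j => g (k + j)) N = mkseq (fun j => g (k + j)) (N - k) ++ mkseq g k.
  rewrite -{1}(subnK kN) mkseq_add.
  congr (_ ++ _); apply: eq_mkseq => j /=.
  by rewrite addnA subnKC // addnC Hp.
by rewrite E1 E2 -{1}(size_mkseq g k) rot_size_cat.
Qed.

Lemma Fac_shift (Sigma : Type) (g : nat -> Sigma) N k : (0 < N)%N ->
  (forall m, g (m + N) = g m) -> Fac (fun l => g (k + l)) = Fac g.
Proof.
move=> N0 Hp; have Hc := perN Hp.
apply/seteqP; split => v [i Hv].
  by exists (k + i); rewrite {1}Hv; apply: eq_mkseq => j /=; rewrite addnA.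
case: N N0 Hp Hc => // N' _ Hp Hc.
exists (i + N' * k); rewrite {1}Hv; apply: eq_mkseq => j /=.
have -> : (k + (i + N' * k + j) = (i + j) + k * N'.+1)%N by nia.
by rewrite Hc.
Qed.

Lemma rep_ex (Sigma : Type) (w : nat -> Sigma) C : Per w C ->
  {xs : Sigma * seq Sigma | Fac (omega xs.1 xs.2) `<=` Fac w /\
     C = [set u | word_equiv u (omega xs.1 xs.2)]}.
Proof. by move=> H; apply: cid; case: H => x [s H]; exists (x, s). Qed.

Lemma key (R : realType) (Sigma : finType) (w : nat -> Sigma) (kappa : R)
 (Hb : forall b, (1 <= b)%N -> exists n, (1 <= n)%N /\ ((Lw w (b*n))%:R <= kappa)%R)
 k (f : 'I_k -> set (nat -> Sigma)) : injective f -> (forall i, Per w (f i)) ->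
 ((k%:R : R) <= kappa)%R.
Proof.
move=> finj fP.
pose r i := projT1 (rep_ex (fP i)).
have rP i : Fac (omega (r i).1 (r i).2) `<=` Fac w /\
   f i = [set u | word_equiv u (omega (r i).1 (r i).2)] := projT2 (rep_ex (fP i)).
pose p i := size ((r i).1 :: (r i).2).
pose b := (\prod_(i < k) p i)%N.
have b0 : (0 < b)%N by rewrite prodn_gt0.
have [n [n1 Hn]] := Hb b b0.
pose N := (b * n)%N.
have N0 : (0 < N)%N by rewrite muln_gt0 b0 n1.
have pN i : (p i %| N)%N by rewrite dvdn_mulr // /b (bigD1 i) //= dvdn_mulr.
pose F i := omega (r i).1 (r i).2.
have FN i m : F i (m + N) = F i m.
  have /dvdnP[c ->] := pN i; exact: omega_per.
have szE i : size (mkseq (F i) N) == N by rewrite size_mkseq.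
pose t i : N.-tuple Sigma := Tuple (szE i).
have ginj : injective (fun i => cyc_class (t i)).
  move=> i j /= E.
  have : t j \in cyc_class (t i).
    rewrite E; apply/imsetP; exists ord0 => //; apply: val_inj; by rewrite /= rot0.
  case/imsetP => l _ /(congr1 val) /=; rewrite rot_mk //; last by rewrite -ltnS ltn_ord.
  move=> Ej.
  have Fij : F j = (fun m => F i (l + m)).
    apply: funext => m; rewrite (divn_eq m N) addnC (perN (FN j)) addnA (perN (FN i)).
    have := congr1 (nth (w 0) ^~ (m %% N)) Ej; rewrite !nth_mkseq ?ltn_pmod //.
  have FE : Fac (F j) = Fac (F i) by rewrite Fij; exact: Fac_shift N0 (FN i).
  apply: finj; rewrite (proj2 (rP i)) (proj2 (rP j)).
  by move: FE; rewrite /F /word_equiv => ->.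
have : (k <= Lw w N)%N.
  rewrite /Lw -cardsE -[X in (X <= _)%N](card_ord k) -cardsT -(card_imset _ ginj).
  apply: subset_leq_card; apply/fintype.subsetP => X /imsetP[i _ ->].
  rewrite inE in_setE; exists (t i) => //=.
  apply/asboolP => u /imsetP [j _ ->] /=.
  rewrite rot_mk //; last by rewrite -ltnS ltn_ord.
  apply: (proj1 (rP i)); exists (j : nat); by rewrite size_mkseq.
by rewrite -(ler_nat R) => H; exact: Order.POrderTheory.le_trans H Hn.
Qed.

Local Open Scope ring_scope.
Local Open Scope card_scope.

Theorem mainTheorem6 (R : realType) (Sigma : finType) (w : nat -> Sigma) (kappa : R) :
  0 < kappa ->
  (forall b : nat, (1 <= b)%N -> exists n : nat, (1 <= n)%N /\ (Lw w (b * n))%:R <= kappa) ->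
  (exists m : nat, m%:R <= kappa /\ (Per w #<= `I_m)) /\
  ((exists K : nat, forall n : nat, (Lw w n <= K)%N) -> finite_set (Per w)).
Proof.
move=> k0 Hb.
suff [m [Hm Hle]] : exists m : nat, m%:R <= kappa /\ (Per w #<= `I_m).
  split; first by exists m.
  by move=> _; apply/finite_set_leP; exists m.
pose Pk k := exists f : 'I_k -> set (nat -> Sigma), injective f /\ forall i, Per w (f i).
pose M := archimedean.Num.bound kappa.
have PkM k : Pk k -> (k <= M)%N.
  move=> [f [fi fP]]; have := key Hb fi fP => kk.
  have := archimedean.Num.Theory.archi_boundP (ltW k0) => kM.
  have : (k%:R : R) < M%:R by exact: Order.POrderTheory.le_lt_trans kk kM.
  by rewrite ltr_nat => /ltnW.
have ex0 : exists k, `[< Pk k >].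
  exists 0%N; apply/asboolP; exists (fun _ => set0); split; last by case.
  by case.
have bnd : forall k, `[< Pk k >] -> (k <= M)%N by move=> k /asboolP; exact: PkM.
case: (ex_maxnP ex0 bnd) => m /asboolP [f [fi fP]] maxm.
exists m; split; first by have := key Hb fi fP.
have sub : Per w `<=` range f.
  move=> C PC; apply: contrapT => nC.
  pose g (i : 'I_m.+1) := if unlift ord_max i is Some j then f j else C.
  have gi : injective g.
    move=> i1 i2; rewrite /g.
    case: unliftP => [j1 ->|->]; case: unliftP => [j2 ->|->] //.
    - by move/fi ->.
    - by move=> E; apply: False_ind; apply: nC; exists j1.
    - by move=> E; apply: False_ind; apply: nC; exists j2.
  have gP i : Per w (g i) by rewrite /g; case: unliftP.
  have : (m.+1 <= m)%N by apply: maxm; apply/asboolP; exists g.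
  by rewrite ltnn.
pose f' (j : nat) := odflt set0 (omap f (insub j)).
have sub2 : range f `<=` f' @` `I_m.
  move=> C [j _ <-]; exists (val j); first exact: ltn_ord.
  by rewrite /f' valK.
exact: card_le_trans (subset_card_le (subset_trans sub sub2)) (card_image_le _ _).
Qed.
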